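(* Let $z_1,\dots,z_n$ and $\zeta_1,\dots,\zeta_{n+1}$ be points of $\overline E\cap U$ such that $V(z_1,\dots,z_n)=V_n(E)$ and $V(\zeta_1,\dots,\zeta_{n+1})=V_{n+1}(E)$. Then \[ \mu(\zeta_1,\dots,\zeta_{n+1})\,M(z_1,\dots,z_n)\le (n+1)\|q\|_{\infty,E}, \] where $\|q\|_{\infty,E}=\sup_{z\in E}|q(z)|$.
   Context: $U$ is the open unit disc and $E\subset U$ is a set with infinitely many points whose set $E_0$ of nontangential limit points has Lebesgue measure zero on $\partial U$ (a point $\zeta\in\partial U$ is a nontangential limit point of $E$ if some sequence $(w_n)$ in $E$ satisfies $w_n\to\zeta$ and $|w_n-\zeta|=O(1-|w_n|)$). The function $q$: if $\overline E\cap\partial U=\emptyset$, $q\equiv1$; otherwise $q$ is holomorphic on $U$ with $0<|q|<1$ on $U$ and $\lim_{z\in E,|z|\to1}q(z)=0$, normalized so that $\sup_U|q|=1$. For $Z_n=(z_1,\dots,z_n)$: $B(Z_n,z)=\prod_{j=1}^n\frac{z-z_j}{1-\overline{z_j}z}$, $B_k(Z_n,z)=\prod_{j\ne k}\frac{z-z_j}{1-\overline{z_j}z}$, $B_q(Z_n,z)=B(Z_n,z)q(z)$ (an empty product equals $1$), $Z_{j-1}=(z_1,\dots,z_{j-1})$. Define $V(Z_n)=\prod_{j=1}^n|B_q(Z_{j-1},z_j)|$, $\mu(Z_n)=\sum_{j=1}^n|B_j(Z_n,z_j)|^{-1}$, $M(Z_n)=\sup_{z\in E}|B_q(Z_n,z)|$,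 and $V_n(E)=\sup_{Z_n\in E^n}V(Z_n)$. *)

(* Defs.v *)
From Stdlib Require Import Reals Lra.
From Coquelicot Require Import Coquelicot.
Open Scope R_scope.

Definition inU (z : C) : Prop := Cmod z < 1.

Definition cl (E : C -> Prop) (z : C) : Prop :=
  forall eps : R, 0 < eps -> exists w, E w /\ Cmod (w - z)%C < eps.

Definition infinite_set (E : C -> Prop) : Prop :=
  forall l : list C, exists z, E z /\ ~ List.In z l.

Definition nt_limit_point (E : C -> Prop) (zeta : C) : Prop :=
  Cmod zeta = 1 /\
  exists w : nat -> C, (forall k, E (w k)) /\
    (forall eps, 0 < eps -> exists N, forall k, (N <= k)%nat -> Cmod (w k - zeta)%C < eps) /\
    (exists K N, forall k, (N <= k)%nat -> Cmod (w k - zeta)%C <= K * (1 - Cmod (w k))).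

Definition null_R (S : R -> Prop) : Prop :=
  forall eps, 0 < eps -> exists a b : nat -> R,
    (forall k, a k <= b k) /\
    (forall x, S x -> exists k, a k <= x <= b k) /\
    (forall N, sum_f_R0 (fun k => b k - a k) N <= eps).

Definition null_circle (A : C -> Prop) : Prop :=
  null_R (fun t => A (cos t, sin t)).

Definition holo_U (f : C -> C) : Prop :=
  forall z, inU z -> ex_derive (K := C_AbsRing) (V := C_NormedModule) f z.

Definition admissible (E : C -> Prop) (q : C -> C) : Prop :=
  (forall z, E z -> inU z) /\
  infinite_set E /\
  null_circle (nt_limit_point E) /\
  ((~ exists zeta, Cmod zeta = 1 /\ cl E zeta) -> forall z, q z = 1%C) /\
  ((exists zeta, Cmod zeta = 1 /\ cl E zeta) ->
     holo_U q /\
     (forall z, inU z -> 0 < Cmod (q z) < 1) /\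
     (forall eps, 0 < eps -> exists delta, 0 < delta /\
        forall z, E z -> 1 - delta < Cmod z -> Cmod (q z) < eps) /\
     is_lub (fun r => exists z, inU z /\ r = Cmod (q z)) 1).

Definition bfac (a z : C) : C := ((z - a) / (1 - Cconj a * z))%C.

(* B(Z_n, z), points Z 0, ..., Z (n-1) *)
Fixpoint Bl (Z : nat -> C) (n : nat) (z : C) : C :=
  match n with
  | O => 1%C
  | S m => (Bl Z m z * bfac (Z m) z)%C
  end.

Fixpoint Blk (Z : nat -> C) (n k : nat) (z : C) : C :=
  match n with
  | O => 1%C
  | S m => if Nat.eqb m k then Blk Z m k z else (Blk Z m k z * bfac (Z m) z)%C
  end.

Definition Bq (q : C -> C) (Z : nat -> C) (n : nat) (z : C) : C := (Bl Z n z * q z)%C.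

Fixpoint Vol (q : C -> C) (Z : nat -> C) (n : nat) : R :=
  match n with
  | O => 1
  | S m => Vol q Z m * Cmod (Bq q Z m (Z m))
  end.

Fixpoint mu_aux (Z : nat -> C) (n m : nat) : R :=
  match m with
  | O => 0
  | S m' => mu_aux Z n m' + / Cmod (Blk Z n m' (Z m'))
  end.
Definition mu (Z : nat -> C) (n : nat) : R := mu_aux Z n n.

Definition Msup (E : C -> Prop) (q : C -> C) (Z : nat -> C) (n : nat) : R :=
  real (Lub_Rbar (fun r => exists z, E z /\ r = Cmod (Bq q Z n z))).

Definition Vn (E : C -> Prop) (q : C -> C) (n : nat) : R :=
  real (Lub_Rbar (fun r => exists Z : nat -> C,
          (forall j, (j < n)%nat -> E (Z j)) /\ r = Vol q Z n)).

Definition qnorm (E : C -> Prop) (q : C -> C) : R :=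
  real (Lub_Rbar (fun r => exists z, E z /\ r = Cmod (q z))).

(* Main.v *)
Require Import Defs.
From Stdlib Require Import Reals Lra Lia Psatz.
From Coquelicot Require Import Coquelicot.
Open Scope R_scope.

Ltac Ceq := repeat match goal with c : C |- _ => destruct c end;
  apply injective_projections; simpl; ring.

Lemma Csub_split (a b : C) : a = ((a - b) + b)%C.
Proof. Ceq. Qed.

Lemma Cmod_sym (a b : C) : Cmod (a - b)%C = Cmod (b - a)%C.
Proof. rewrite <- Cmod_opp. f_equal. Ceq. Qed.

Lemma rev_tri (a b : C) : Rabs (Cmod a - Cmod b) <= Cmod (a - b)%C.
Proof.
  assert (H1 := Cmod_triangle (a - b) b).
  assert (H2 := Cmod_triangle (b - a) a).
  rewrite <- Csub_split in H1. rewrite <- Csub_split in H2.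
  rewrite <- Cmod_sym in H2.
  apply Rabs_le; lra.
Qed.

Lemma Cinv_0 : (/ (0:C))%C = 0%C.
Proof. unfold Cinv; simpl. apply injective_projections; simpl; unfold Rdiv;
  ring. Qed.

Lemma Cmod_inv_all (x : C) : Cmod (/ x)%C = / Cmod x.
Proof.
  destruct (Ceq_dec x 0) as [->|H].
  - rewrite Cinv_0, Cmod_0, Rinv_0; reflexivity.
  - apply Cmod_inv; auto.
Qed.

Lemma cont_of_derive (q : C -> C) x :
  ex_derive (K := C_AbsRing) (V := C_NormedModule) q x ->
  forall eps, 0 < eps -> exists d, 0 < d /\ forall w, Cmod (w - x)%C < d -> Cmod (q w - q x)%C < eps.
Proof.
  intros H eps He. apply ex_derive_continuous in H.
  unfold continuous, filterlim, filter_le, filtermap in H.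
  assert (HP : locally (q x) (fun y : C_NormedModule => Cmod (y - q x)%C < eps)).
  { apply (locally_le_locally_norm (V:=C_NormedModule) (q x)  (fun y : C_NormedModule => Cmod (y - q x) < eps)). exists (mkposreal eps He). intros y Hy.
    unfold ball_norm in Hy. simpl in Hy. change (@norm C_AbsRing C_NormedModule (minus y (q x)) < eps). exact Hy. }
  specialize (H _ HP).
  destruct H as [d Hd]. exists d. split; [apply cond_pos|].
  intros w Hw. apply Hd. exact Hw.
Qed.

Fixpoint prodR (f : nat -> R) (n : nat) : R :=
  match n with O => 1 | S m => prodR f m * f m end.

Lemma prodR_ext f g n : (forall i, (i < n)%nat -> f i = g i) -> prodR f n = prodR g n.
Proof.
  induction n; simpl; intros H; auto.
  rewrite IHn by (intros; apply H; lia). rewrite H by lia. auto.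
Qed.

Lemma prodR_split f k n : (k < n)%nat ->
  prodR f n = f k * prodR (fun i => if Nat.eqb i k then 1 else f i) n.
Proof.
  induction n; intros Hk; [lia|]. simpl.
  destruct (Nat.eqb n k) eqn:E.
  - apply Nat.eqb_eq in E; subst.
    rewrite (prodR_ext (fun i => if Nat.eqb i k then 1 else f i) f k).
    + ring.
    + intros i Hi. destruct (Nat.eqb i k) eqn:E2; auto. apply Nat.eqb_eq in E2; lia.
  - apply Nat.eqb_neq in E. rewrite IHn by lia. ring.
Qed.

Definition ridx (k i : nat) : nat := if Nat.ltb i k then i else S i.

Lemma prodR_rem f k n : (k <= n)%nat ->
  prodR (fun i => f (ridx k i)) n = prodR (fun i => if Nat.eqb i k then 1 else f i) (S n).
Proof.
  induction n; intros Hk.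
  - assert (k = 0%nat) by lia. subst. simpl. ring.
  - destruct (Nat.eq_dec k (S n)) as [->|Hne].
    + change (prodR (fun i => f (ridx (S n) i)) (S n) =
        prodR (fun i => if Nat.eqb i (S n) then 1 else f i) (S n) *
        (if Nat.eqb (S n) (S n) then 1 else f (S n))).
      rewrite Nat.eqb_refl, Rmult_1_r. apply prodR_ext.
      intros i Hi. unfold ridx. destruct (Nat.ltb i (S n)) eqn:E1; [|apply Nat.ltb_ge in E1; lia].
      destruct (Nat.eqb i (S n)) eqn:E2; [apply Nat.eqb_eq in E2; lia|auto].
    + change (prodR (fun i => f (ridx k i)) n * f (ridx k n) =
        prodR (fun i => if Nat.eqb i k then 1 else f i) (S n) *
        (if Nat.eqb (S n) k then 1 else f (S n))).
      rewrite IHn by lia.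
      unfold ridx. destruct (Nat.ltb n k) eqn:E1; [apply Nat.ltb_lt in E1; lia|].
      destruct (Nat.eqb (S n) k) eqn:E2; [apply Nat.eqb_eq in E2; lia|auto].
Qed.

Definition Dp (g : C -> C -> R) (Z : nat -> C) (n : nat) : R :=
  prodR (fun j => prodR (fun i => g (Z i) (Z j)) j) n.

Lemma Dp_ext g Z W n : (forall j, (j < n)%nat -> Z j = W j) -> Dp g Z n = Dp g W n.
Proof.
  intros H. unfold Dp. apply prodR_ext. intros j Hj. rewrite H by lia.
  apply prodR_ext. intros i Hi. rewrite H by lia. auto.
Qed.

Lemma Dp_rem g Z n k : (forall a b, g a b = g b a) -> (k <= n)%nat ->
  Dp g Z (S n) = prodR (fun i => if Nat.eqb i k then 1 else g (Z i) (Z k)) (S n) *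
                 Dp g (fun i => Z (ridx k i)) n.
Proof.
  intros Hs. revert k. induction n; intros k Hk.
  - assert (k = 0%nat) by lia. subst. unfold Dp; simpl. ring.
  - destruct (Nat.eq_dec k (S n)) as [->|Hne].
    + rewrite (Dp_ext g (fun i => Z (ridx (S n) i)) Z).
      2:{ intros j Hj. unfold ridx. destruct (Nat.ltb j (S n)) eqn:E; auto.
          apply Nat.ltb_ge in E; lia. }
      unfold Dp at 1. change (Dp g Z (S n) * prodR (fun i => g (Z i) (Z (S n))) (S n) =
        (prodR (fun i => if Nat.eqb i (S n) then 1 else g (Z i) (Z (S n))) (S n) *
         (if Nat.eqb (S n) (S n) then 1 else g (Z (S n)) (Z (S n)))) * Dp g Z (S n)).
      rewrite Nat.eqb_refl.
      rewrite (prodR_ext (fun i => if Nat.eqb i (S n) then 1 else g (Z i) (Z (S n)))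
        (fun i => g (Z i) (Z (S n)))).
      * ring.
      * intros i Hi. destruct (Nat.eqb i (S n)) eqn:E; auto. apply Nat.eqb_eq in E; lia.
    + assert (Hk' : (k <= n)%nat) by lia.
      unfold Dp at 1. change (Dp g Z (S n) * prodR (fun i => g (Z i) (Z (S n))) (S n) =
        (prodR (fun i => if Nat.eqb i k then 1 else g (Z i) (Z k)) (S n) *
         (if Nat.eqb (S n) k then 1 else g (Z (S n)) (Z k))) *
        (Dp g (fun i => Z (ridx k i)) n *
         prodR (fun i => g (Z (ridx k i)) (Z (ridx k n))) n)).
      rewrite (IHn k Hk').
      assert (Hr : ridx k n = S n).
      { unfold ridx. destruct (Nat.ltb n k) eqn:E; auto. apply Nat.ltb_lt in E; lia. }
      rewrite Hr.
      rewrite (prodR_rem (fun i => g (Z i) (Z (S n))) k n Hk').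
      rewrite (prodR_split (fun i => g (Z i) (Z (S n))) k (S n)) by lia.
      destruct (Nat.eqb (S n) k) eqn:E; [apply Nat.eqb_eq in E; lia|].
      rewrite (Hs (Z k) (Z (S n))). ring.
Qed.

Definition gB (a b : C) : R := Cmod (bfac a b).

Lemma gB_form a b : gB a b = Cmod (b - a)%C * / Cmod (1 - Cconj a * b)%C.
Proof. unfold gB, bfac, Cdiv. rewrite Cmod_mult, Cmod_inv_all. auto. Qed.

Lemma gB_sym a b : gB a b = gB b a.
Proof.
  rewrite !gB_form. rewrite (Cmod_sym b a).
  replace (1 - Cconj b * a)%C with (Cconj (1 - Cconj a * b)%C) by Ceq.
  rewrite Cmod_conj. auto.
Qed.

Lemma Bl_mod Z m z : Cmod (Bl Z m z) = prodR (fun i => gB (Z i) z) m.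
Proof. induction m; simpl. apply Cmod_1. rewrite Cmod_mult, IHm. auto. Qed.

Lemma Blk_mod Z N k z : Cmod (Blk Z N k z) =
  prodR (fun i => if Nat.eqb i k then 1 else gB (Z i) z) N.
Proof.
  induction N; simpl. apply Cmod_1.
  destruct (Nat.eqb N k); [rewrite IHN; ring|]. rewrite Cmod_mult, IHN. auto.
Qed.

Lemma Vol_form q Z n : Vol q Z n = prodR (fun j => Cmod (q (Z j))) n * Dp gB Z n.
Proof.
  induction n; simpl. unfold Dp; simpl; ring.
  rewrite IHn. unfold Bq. rewrite Cmod_mult, Bl_mod. unfold Dp; simpl. ring.
Qed.

Lemma Vol_rem q Z n k : (k <= n)%nat ->
  Vol q Z (S n) = Cmod (q (Z k)) * Cmod (Blk Z (S n) k (Z k)) * Vol q (fun i => Z (ridx k i)) n.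
Proof.
  intros Hk. rewrite !Vol_form, Blk_mod.
  rewrite (Dp_rem gB Z n k gB_sym Hk).
  rewrite (prodR_split (fun j => Cmod (q (Z j))) k (S n)) by lia.
  rewrite <- (prodR_rem (fun j => Cmod (q (Z j))) k n Hk). ring.
Qed.

Lemma Vol_ext q Z W n : (forall j, (j < n)%nat -> Z j = W j) -> Vol q Z n = Vol q W n.
Proof. intros H. rewrite !Vol_form. rewrite (Dp_ext gB Z W n H).
  rewrite (prodR_ext _ (fun j => Cmod (q (W j)))); auto. intros; rewrite H; auto. Qed.

Definition FZ (n : nat) (Z : nat -> C) (P : (nat -> C) -> Prop) : Prop :=
  exists d, 0 < d /\ forall W, (forall j, (j < n)%nat -> Cmod (W j - Z j)%C < d) -> P W.

Global Instance FZ_filter n Z : Filter (FZ n Z).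
Proof.
  constructor.
  - exists 1; split; [lra|auto].
  - intros P Q [d1 [H1 HP]] [d2 [H2 HQ]]. exists (Rmin d1 d2); split.
    + apply Rmin_pos; auto.
    + intros W HW; split; [apply HP|apply HQ]; intros j Hj; specialize (HW j Hj).
      * apply Rlt_le_trans with (1:=HW); apply Rmin_l.
      * apply Rlt_le_trans with (1:=HW); apply Rmin_r.
  - intros P Q H [d [Hd HP]]. exists d; split; auto.
Qed.

Lemma lim_of_eps (h : (nat -> C) -> R) n Z :
  (forall eps, 0 < eps -> exists d, 0 < d /\ forall W,
     (forall j, (j < n)%nat -> Cmod (W j - Z j)%C < d) -> Rabs (h W - h Z) < eps) ->
  filterlim h (FZ n Z) (locally (h Z)).
Proof.
  intros H P [eps He]. destruct (H eps (cond_pos eps)) as [d [Hd HW]].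
  exists d; split; auto. intros W HWj. apply He. apply HW; auto.
Qed.

Lemma eps_of_lim (h : (nat -> C) -> R) n Z l :
  filterlim h (FZ n Z) (locally l) ->
  forall eps, 0 < eps -> exists d, 0 < d /\ forall W,
     (forall j, (j < n)%nat -> Cmod (W j - Z j)%C < d) -> Rabs (h W - l) < eps.
Proof.
  intros H eps He.
  assert (HP : locally l (fun y => Rabs (y - l) < eps)).
  { exists (mkposreal eps He). intros y Hy. exact Hy. }
  destruct (H _ HP) as [d [Hd HW]]. exists d; split; auto.
Qed.

Lemma lim_mult {T} (F : (T -> Prop) -> Prop) {FF : Filter F} (f g : T -> R) a b :
  filterlim f F (locally a) -> filterlim g F (locally b) ->
  filterlim (fun x => f x * g x) F (locally (a * b)).
Proof.
  intros Hf Hg. eapply filterlim_comp_2; [exact Hf|exact Hg|].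
  apply (filterlim_Rbar_mult a b (a * b)). reflexivity.
Qed.

Lemma lim_inv {T} (F : (T -> Prop) -> Prop) {FF : Filter F} (f : T -> R) a :
  a <> 0 -> filterlim f F (locally a) ->
  filterlim (fun x => / f x) F (locally (/ a)).
Proof.
  intros Ha Hf. eapply filterlim_comp; [exact Hf|].
  apply (filterlim_Rbar_inv (Finite a)). intro H; injection H; auto.
Qed.

Lemma lim_prodR {T} (F : (T -> Prop) -> Prop) {FF : Filter F} (f : T -> nat -> R) l m :
  (forall i, (i < m)%nat -> filterlim (fun x => f x i) F (locally (l i))) ->
  filterlim (fun x => prodR (f x) m) F (locally (prodR l m)).
Proof.
  induction m; intros H; simpl.
  - apply filterlim_const.
  - apply lim_mult; [exact FF| |]. apply IHm; intros; apply H; lia. apply H; lia.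
Qed.



Lemma lim_b1 n Z i j : (i < n)%nat -> (j < n)%nat ->
  filterlim (fun W => Cmod (W j - W i)%C) (FZ n Z) (locally (Cmod (Z j - Z i)%C)).
Proof.
  intros Hi Hj. apply lim_of_eps. intros eps He. exists (eps / 2). split; [lra|].
  intros W HW. eapply Rle_lt_trans; [apply rev_tri|].
  replace (W j - W i - (Z j - Z i))%C with ((W j - Z j) + - (W i - Z i))%C by Ceq.
  eapply Rle_lt_trans; [apply Cmod_triangle|]. rewrite Cmod_opp.
  specialize (HW i Hi) as H1. specialize (HW j Hj) as H2. lra.
Qed.

Lemma lim_b2 n Z i j : (i < n)%nat -> (j < n)%nat ->
  filterlim (fun W => Cmod (1 - Cconj (W i) * W j)%C) (FZ n Z)
    (locally (Cmod (1 - Cconj (Z i) * Z j)%C)).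
Proof.
  intros Hi Hj. apply lim_of_eps. intros eps He.
  set (K := Cmod (Z i) + Cmod (Z j) + 1).
  assert (HK : 0 < K) by (unfold K; assert (H1 := Cmod_ge_0 (Z i)); assert (H2 := Cmod_ge_0 (Z j)); lra).
  exists (Rmin 1 (eps / (K + 1))). split.
  { apply Rmin_pos; [lra|]. apply Rdiv_lt_0_compat; lra. }
  intros W HW. eapply Rle_lt_trans; [apply rev_tri|].
  replace (1 - Cconj (W i) * W j - (1 - Cconj (Z i) * Z j))%C with
    (- (Cconj (W i) * (W j - Z j) + Cconj (W i - Z i) * Z j))%C by Ceq.
  rewrite Cmod_opp. eapply Rle_lt_trans; [apply Cmod_triangle|].
  rewrite !Cmod_mult, !Cmod_conj.
  specialize (HW i Hi) as H1. specialize (HW j Hj) as H2.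
  set (d := Rmin 1 (eps / (K + 1))) in *.
  assert (Hd1 : d <= 1) by apply Rmin_l.
  assert (Hd2 : d <= eps / (K + 1)) by apply Rmin_r.
  assert (Hd3 : d * (K + 1) <= eps).
  { apply Rmult_le_compat_r with (r := K + 1) in Hd2; [|lra].
    unfold Rdiv in Hd2. rewrite Rmult_assoc, Rinv_l, Rmult_1_r in Hd2; lra. }
  assert (HWi : Cmod (W i) <= Cmod (Z i) + Cmod (W i - Z i)%C).
  { rewrite (Csub_split (W i) (Z i)) at 1. rewrite Rplus_comm. apply Cmod_triangle. }
  assert (G1 := Cmod_ge_0 (W j - Z j)%C). assert (G2 := Cmod_ge_0 (W i - Z i)%C).
  assert (G3 := Cmod_ge_0 (Z i)). assert (G4 := Cmod_ge_0 (Z j)).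
  assert (G5 := Cmod_ge_0 (W i)).
  apply Rle_lt_trans with (Cmod (W i) * d + d * Cmod (Z j)).
  - apply Rplus_le_compat; [apply Rmult_le_compat_l|apply Rmult_le_compat_r]; lra.
  - unfold K in Hd3. nra.
Qed.

Lemma lim_b3 (q : C -> C) n Z j : (j < n)%nat ->
  (forall eps, 0 < eps -> exists d, 0 < d /\ forall w, Cmod (w - Z j)%C < d -> Cmod (q w - q (Z j))%C < eps) ->
  filterlim (fun W => Cmod (q (W j))) (FZ n Z) (locally (Cmod (q (Z j)))).
Proof.
  intros Hj Hq. apply lim_of_eps. intros eps He. destruct (Hq eps He) as [d [Hd Hw]].
  exists d; split; auto. intros W HW. eapply Rle_lt_trans; [apply rev_tri|]. apply Hw, HW, Hj.
Qed.

Lemma den_nz a b : inU a -> inU b -> Cmod (1 - Cconj a * b)%C <> 0.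
Proof.
  unfold inU. intros Ha Hb H. apply Cmod_eq_0 in H.
  assert (H1 : (Cconj a * b)%C = 1%C).
  { replace (Cconj a * b)%C with (1 - (1 - Cconj a * b))%C by Ceq. rewrite H. Ceq. }
  assert (H2 := f_equal Cmod H1). rewrite Cmod_mult, Cmod_conj, Cmod_1 in H2.
  assert (G3 := Cmod_ge_0 a). assert (G4 := Cmod_ge_0 b). nra.
Qed.

Lemma lim_gB n Z i j : (i < n)%nat -> (j < n)%nat -> inU (Z i) -> inU (Z j) ->
  filterlim (fun W => gB (W i) (W j)) (FZ n Z) (locally (gB (Z i) (Z j))).
Proof.
  intros Hi Hj Ui Uj.
  eapply filterlim_ext; [intros W; symmetry; apply gB_form|]. rewrite gB_form.
  apply lim_mult; [exact (FZ_filter n Z)| apply lim_b1; auto|].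
  apply lim_inv; [exact (FZ_filter n Z)| apply den_nz; auto| apply lim_b2; auto].
Qed.

Lemma lim_Vol (q : C -> C) n Z :
  (forall j, (j < n)%nat -> inU (Z j)) ->
  (forall j, (j < n)%nat -> forall eps, 0 < eps -> exists d, 0 < d /\ forall w,
      Cmod (w - Z j)%C < d -> Cmod (q w - q (Z j))%C < eps) ->
  filterlim (fun W => Vol q W n) (FZ n Z) (locally (Vol q Z n)).
Proof.
  intros HU Hq.
  eapply filterlim_ext; [intros W; symmetry; apply Vol_form|]. rewrite Vol_form.
  apply lim_mult; [exact (FZ_filter n Z)| |].
  - apply lim_prodR; [exact (FZ_filter n Z)|]. intros i Hi. apply lim_b3; auto.
  - unfold Dp. apply lim_prodR; [exact (FZ_filter n Z)|]. intros j Hj.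
    apply (@lim_prodR _ (FZ n Z) (FZ_filter n Z) (fun W i => gB (W i) (W j))).
    intros i Hi. apply lim_gB; [lia|lia|apply HU; lia|apply HU; lia].
Qed.

From Stdlib Require Import Classical List.

Lemma lub_both (S : R -> Prop) B x0 : S x0 -> (forall x, S x -> x <= B) ->
  (forall x, S x -> x <= real (Lub_Rbar S)) /\
  (forall b, (forall x, S x -> x <= b) -> real (Lub_Rbar S) <= b).
Proof.
  intros H0 HB. destruct (Lub_Rbar_correct S) as [Hub Hlub].
  destruct (Lub_Rbar S) as [l| |].
  - split. intros x Sx. exact (Hub x Sx). intros b Hb. apply (Hlub (Finite b)).
    intros x Sx. exact (Hb x Sx).
  - exfalso. exact (Hlub (Finite B) HB).
  - exfalso. exact (Hub x0 H0).
Qed.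

Lemma Cmod_lt1_sq a : Cmod a < 1 -> fst a ^ 2 + snd a ^ 2 < 1.
Proof.
  unfold Cmod. intros H. destruct (Rlt_or_le (fst a ^ 2 + snd a ^ 2) 1); auto.
  exfalso. apply sqrt_le_1_alt in H0. rewrite sqrt_1 in H0. lra.
Qed.

Lemma gB_le1 a b : inU a -> inU b -> gB a b <= 1.
Proof.
  intros Ha Hb. rewrite gB_form.
  assert (Hd := den_nz a b Ha Hb). assert (G := Cmod_ge_0 (1 - Cconj a * b)%C).
  assert (Hpos : 0 < Cmod (1 - Cconj a * b)%C) by lra.
  assert (Hle : Cmod (b - a)%C <= Cmod (1 - Cconj a * b)%C).
  { unfold inU in *. apply Cmod_lt1_sq in Ha. apply Cmod_lt1_sq in Hb.
    destruct a as [a1 a2], b as [b1 b2]. simpl in *. unfold Cmod. simpl.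
    apply sqrt_le_1_alt.
    assert (0 <= (1 - (a1*a1 + a2*a2)) * (1 - (b1*b1+b2*b2))) by (apply Rmult_le_pos; nra).
    nra. }
  apply Rmult_le_reg_r with (Cmod (1 - Cconj a * b)%C); auto.
  rewrite Rmult_assoc, Rinv_l by lra. lra.
Qed.

Lemma gB_pos a b : inU a -> inU b -> a <> b -> 0 < gB a b.
Proof.
  intros Ha Hb Hab. rewrite gB_form.
  assert (Hd := den_nz a b Ha Hb). assert (G := Cmod_ge_0 (1 - Cconj a * b)%C).
  apply Rmult_lt_0_compat.
  - apply Cmod_gt_0. intro H. apply Hab. rewrite (Csub_split b a), H. Ceq.
  - apply Rinv_0_lt_compat. lra.
Qed.

Lemma prodR_01 f m : (forall i, (i < m)%nat -> 0 <= f i <= 1) -> 0 <= prodR f m <= 1.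
Proof.
  induction m; simpl; intros H; [lra|].
  assert (H1 := IHm (fun i Hi => H i ltac:(lia))). assert (H2 := H m ltac:(lia)). nra.
Qed.

Lemma prodR_pos f m : (forall i, (i < m)%nat -> 0 < f i) -> 0 < prodR f m.
Proof.
  induction m; simpl; intros H; [lra|].
  apply Rmult_lt_0_compat. apply IHm; intros; apply H; lia. apply H; lia.
Qed.

Lemma Bl_ext Z W m x : (forall j, (j < m)%nat -> Z j = W j) -> Bl Z m x = Bl W m x.
Proof. induction m; simpl; intros H; auto. rewrite IHm by (intros; apply H; lia). rewrite H by lia. auto. Qed.

Lemma approx (E : C -> Prop) n Z d : 0 < d -> (forall j, (j < n)%nat -> cl E (Z j)) ->
  exists W, forall j, (j < n)%nat -> E (W j) /\ Cmod (W j - Z j)%C < d.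
Proof.
  intros Hd. induction n; intros H.
  - exists Z. intros; lia.
  - destruct (IHn (fun j Hj => H j ltac:(lia))) as [W HW].
    destruct (H n ltac:(lia) d Hd) as [w [Ew Hw]].
    exists (fun j => if Nat.eqb j n then w else W j). intros j Hj.
    destruct (Nat.eqb j n) eqn:E1.
    + apply Nat.eqb_eq in E1; subst. auto.
    + apply Nat.eqb_neq in E1. apply HW. lia.
Qed.

Lemma distinct_pts (E : C -> Prop) n : infinite_set E ->
  exists W, (forall j, (j < n)%nat -> E (W j)) /\
    (forall i j, (i < n)%nat -> (j < n)%nat -> i <> j -> W i <> W j).
Proof.
  intros Hinf. induction n.
  - exists (fun _ => 0%C). split; intros; lia.
  - destruct IHn as [W [HE HD]].
    destruct (Hinf (map W (seq 0 n))) as [w [Ew Hw]].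
    exists (fun j => if Nat.eqb j n then w else W j). split.
    + intros j Hj. destruct (Nat.eqb j n) eqn:E1; auto. apply Nat.eqb_neq in E1. apply HE; lia.
    + intros i j Hi Hj Hij.
      destruct (Nat.eqb_spec i n); destruct (Nat.eqb_spec j n).
      * lia.
      * intro Heq. apply Hw. rewrite Heq. apply in_map. apply in_seq. lia.
      * intro Heq. apply Hw. rewrite <- Heq. apply in_map. apply in_seq. lia.
      * apply HD; lia.
Qed.

Lemma mu_aux_nonneg Z N m : 0 <= mu_aux Z N m.
Proof.
  induction m; simpl; [lra|].
  assert (0 <= / Cmod (Blk Z N m (Z m))); [|lra].
  destruct (Req_dec (Cmod (Blk Z N m (Z m))) 0) as [H|H].
  - rewrite H, Rinv_0; lra.
  - apply Rlt_le, Rinv_0_lt_compat. assert (G := Cmod_ge_0 (Blk Z N m (Z m))); lra.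
Qed.

Theorem proposition3p6 (E : C -> Prop) (q : C -> C) (n : nat)
  (z zeta : nat -> C) :
  admissible E q ->
  (forall j, (j < n)%nat -> cl E (z j) /\ inU (z j)) ->
  (forall j, (j < S n)%nat -> cl E (zeta j) /\ inU (zeta j)) ->
  Vol q z n = Vn E q n ->
  Vol q zeta (S n) = Vn E q (S n) ->
  mu zeta (S n) * Msup E q z n <= INR (S n) * qnorm E q.
Proof.
  intros Hadm Hz Hzeta Hvz Hvzeta.
  destruct Hadm as [HEU [Hinf [_ [H1 H2]]]].
  assert (Hq : forall x, inU x -> (0 < Cmod (q x) <= 1) /\
     (forall eps, 0 < eps -> exists d, 0 < d /\ forall w, Cmod (w - x)%C < d -> Cmod (q w - q x)%C < eps)).
  { intros x Hx. destruct (classic (exists zeta0, Cmod zeta0 = 1 /\ cl E zeta0)) as [Hc|Hc].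
    - destruct (H2 Hc) as [Hh [Hb _]]. split.
      + specialize (Hb x Hx); lra.
      + apply cont_of_derive, Hh, Hx.
    - split.
      + rewrite (H1 Hc x), Cmod_1. lra.
      + intros eps He. exists 1. split; [lra|]. intros w _.
        rewrite (H1 Hc w), (H1 Hc x). match goal with |- Cmod ?x < _ => replace x with (RtoC 0) by Ceq end; rewrite Cmod_0; lra. }
  assert (Hvb : forall m W, (forall j, (j < m)%nat -> inU (W j)) -> 0 <= Vol q W m <= 1).
  { intros m W HW. rewrite Vol_form.
    assert (A1 : 0 <= prodR (fun j => Cmod (q (W j))) m <= 1).
    { apply prodR_01. intros i Hi. destruct (Hq (W i) (HW i Hi)) as [Hb _]. lra. }
    assert (A2 : 0 <= Dp gB W m <= 1).
    { unfold Dp. apply prodR_01. intros j Hj. apply prodR_01. intros i Hi.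
      split. apply Cmod_ge_0. apply gB_le1; apply HW; lia. }
    nra. }
  assert (HVn : forall m W, (forall j, (j < m)%nat -> E (W j)) -> Vol q W m <= Vn E q m).
  { intros m W HW. unfold Vn.
    destruct (lub_both (fun r => exists Z : nat -> C,
          (forall j, (j < m)%nat -> E (Z j)) /\ r = Vol q Z m) 1 (Vol q W m)) as [Hu _].
    - exists W; auto.
    - intros x [Z [HZ ->]]. apply Hvb. intros; apply HEU, HZ; auto.
    - apply Hu. exists W; auto. }
  assert (Hcl : forall m Z, (forall j, (j < m)%nat -> cl E (Z j) /\ inU (Z j)) -> Vol q Z m <= Vn E q m).
  { intros m Z HZ. apply Rle_plus_epsilon. intros eps He.
    assert (Hl := lim_Vol q m Z (fun j Hj => proj2 (HZ j Hj))
                    (fun j Hj => proj2 (Hq (Z j) (proj2 (HZ j Hj))))).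
    destruct (eps_of_lim _ _ _ _ Hl eps He) as [d [Hd HW]].
    destruct (approx E m Z d Hd (fun j Hj => proj1 (HZ j Hj))) as [W HWE].
    assert (A := HW W (fun j Hj => proj2 (HWE j Hj))).
    assert (B := HVn m W (fun j Hj => proj1 (HWE j Hj))).
    destruct (Rabs_def2 _ _ A). lra. }
  assert (HVpos : 0 < Vn E q n).
  { destruct (distinct_pts E n Hinf) as [W [HWE HWD]].
    apply Rlt_le_trans with (Vol q W n); [|apply HVn; auto].
    rewrite Vol_form. apply Rmult_lt_0_compat.
    - apply prodR_pos; intros i Hi. apply Hq, HEU, HWE; auto.
    - unfold Dp. apply prodR_pos; intros j Hj. apply prodR_pos; intros i Hi.
      apply gB_pos; [apply HEU, HWE; lia|apply HEU, HWE; lia|apply HWD; lia]. }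
  assert (Hqn : forall x, cl E x -> inU x -> Cmod (q x) <= qnorm E q).
  { intros x Hcx Hux.
    assert (Hub : forall w, E w -> Cmod (q w) <= qnorm E q).
    { intros w Ew. unfold qnorm.
      destruct (lub_both (fun r => exists z0, E z0 /\ r = Cmod (q z0)) 1 (Cmod (q w))) as [Hu _].
      - exists w; auto.
      - intros r [z0 [Ez0 ->]]. apply Hq, HEU, Ez0.
      - apply Hu. exists w; auto. }
    apply Rle_plus_epsilon. intros eps He.
    destruct (proj2 (Hq x Hux) eps He) as [d [Hd Hw]].
    destruct (Hcx d Hd) as [w [Ew Hwd]].
    assert (A := Hw w Hwd). assert (B := rev_tri (q w) (q x)). assert (B2 := Hub w Ew).
    destruct (Rabs_def2' _ _ B) as [B3 B4] || idtac.
    assert (Cmod (q x) - Cmod (q w) <= Rabs (Cmod (q w) - Cmod (q x))).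
    { rewrite Rabs_minus_sym. apply Rle_abs. }
    lra. }
  assert (Hel : forall w k, E w -> (k <= n)%nat ->
     Cmod (Bq q z n w) * / Cmod (Blk zeta (S n) k (zeta k)) <= Cmod (q (zeta k))).
  { intros w k Ew Hk.
    set (z' := fun j => if Nat.eqb j n then w else z j).
    assert (Hzz : forall j, (j < n)%nat -> z' j = z j).
    { intros j Hj. unfold z'. destruct (Nat.eqb_spec j n); [lia|auto]. }
    assert (E1 : Vol q z' (S n) = Vol q z n * Cmod (Bq q z n w)).
    { change (Vol q z' n * Cmod (Bq q z' n (z' n)) = Vol q z n * Cmod (Bq q z n w)).
      unfold Bq. rewrite (Vol_ext q z' z n Hzz), (Bl_ext z' z n _ Hzz).
      unfold z'. rewrite Nat.eqb_refl. reflexivity. }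
    assert (E2 : Vol q z' (S n) <= Vn E q (S n)).
    { apply Hcl. intros j Hj. unfold z'. destruct (Nat.eqb_spec j n).
      - split; [|apply HEU; auto]. intros eps He. exists w. split; auto.
        match goal with |- Cmod ?x < _ => replace x with (RtoC 0) by Ceq end; rewrite Cmod_0; auto.
      - apply Hz; lia. }
    assert (E3 := Vol_rem q zeta n k Hk).
    assert (HU' : forall j, (j < n)%nat -> cl E (zeta (ridx k j)) /\ inU (zeta (ridx k j))).
    { intros j Hj. apply Hzeta. unfold ridx. destruct (Nat.ltb j k); lia. }
    assert (E4 := Hcl n _ HU').
    assert (E5 := Hvb n _ (fun j Hj => proj2 (HU' j Hj))).
    set (G := Cmod (Blk zeta (S n) k (zeta k))) in *.
    set (Q := Cmod (q (zeta k))) in *. set (r := Cmod (Bq q z n w)) in *.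
    assert (HG : 0 <= G) by apply Cmod_ge_0. assert (HQ : 0 <= Q) by apply Cmod_ge_0.
    assert (Hr : 0 <= r) by apply Cmod_ge_0.
    assert (K1 : Vn E q n * r <= Vn E q n * (Q * G)).
    { rewrite <- Hvz at 1. rewrite <- E1. eapply Rle_trans; [exact E2|].
      rewrite <- Hvzeta, E3. assert (0 <= Q * G) by (apply Rmult_le_pos; auto). nra. }
    assert (K2 : r <= Q * G) by (apply Rmult_le_reg_l with (Vn E q n); auto).
    destruct (Req_dec G 0) as [HG0|HG0].
    - rewrite HG0, Rinv_0, Rmult_0_r. auto.
    - apply Rmult_le_reg_r with G; [lra|]. rewrite Rmult_assoc, Rinv_l by auto. lra. }
  destruct (Hinf nil) as [w0 [Ew0 _]].
  assert (Hmu : forall r, (exists w, E w /\ r = Cmod (Bq q z n w)) ->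
     mu zeta (S n) * r <= INR (S n) * qnorm E q).
  { intros r [w [Ew ->]]. unfold mu.
    assert (forall m, (m <= S n)%nat -> mu_aux zeta (S n) m * Cmod (Bq q z n w) <= INR m * qnorm E q).
    { induction m; intros Hm.
      - simpl. lra.
      - change ((mu_aux zeta (S n) m + / Cmod (Blk zeta (S n) m (zeta m))) * Cmod (Bq q z n w)
          <= INR (S m) * qnorm E q).
        rewrite S_INR. assert (IH := IHm ltac:(lia)).
        assert (A := Hel w m Ew ltac:(lia)).
        assert (B := Hqn (zeta m) (proj1 (Hzeta m ltac:(lia))) (proj2 (Hzeta m ltac:(lia)))).
        rewrite Rmult_plus_distr_r. rewrite (Rmult_comm (/ _)). lra. }
    apply H; auto. }
  assert (Hm0 := mu_aux_nonneg zeta (S n) (S n)). fold (mu zeta (S n)) in Hm0.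
  destruct (Rle_lt_or_eq_dec _ _ Hm0) as [Hpos|H0].
  - unfold Msup.
    destruct (lub_both (fun r => exists z0, E z0 /\ r = Cmod (Bq q z n z0))
        (INR (S n) * qnorm E q / mu zeta (S n)) (Cmod (Bq q z n w0))) as [_ Hl].
    + exists w0; auto.
    + intros x Hx. apply Rmult_le_reg_l with (mu zeta (S n)); auto.
      replace (mu zeta (S n) * (INR (S n) * qnorm E q / mu zeta (S n))) with
        (INR (S n) * qnorm E q) by (field; lra). apply Hmu; auto.
    + assert (Hb := Hl (INR (S n) * qnorm E q / mu zeta (S n))).
      apply Rle_trans with (mu zeta (S n) * (INR (S n) * qnorm E q / mu zeta (S n))).
      * apply Rmult_le_compat_l; [lra|]. apply Hb. intros x Hx.
        apply Rmult_le_reg_l with (mu zeta (S n)); auto.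
        replace (mu zeta (S n) * (INR (S n) * qnorm E q / mu zeta (S n))) with
          (INR (S n) * qnorm E q) by (field; lra). apply Hmu; auto.
      * right. field. lra.
  - rewrite <- H0, Rmult_0_l.
    assert (A := Hmu (Cmod (Bq q z n w0)) ltac:(exists w0; auto)). rewrite <- H0 in A. lra.
Qed.
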